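(* Let $m\ge1$ be an integer and let $\delta>1$ be the positive root of $x^2-(m+1)x-1$. Let $r\in(0,1)$ be rational and suppose its Rényi $\delta$-expansion is purely periodic, $d_\delta(r)=(d_1d_2\cdots d_n)^\omega$ for some $n\ge1$. Then $d_n=0$.
   Context: The Rényi $\delta$-expansion of $x\in[0,1)$ is the greedy expansion $d_\delta(x)=d_1d_2\cdots$ defined by $r_0=x$, $d_{k+1}=\lfloor\delta r_k\rfloor$, $r_{k+1}=\delta r_k-d_{k+1}$, so that $x=\sum_{k\ge1}d_k\delta^{-k}$. For this $\delta$, the digits lie in $\{0,1,\dots,m+1\}$ and the sequences $d_{i+1}d_{i+2}\cdots$ are lexicographically smaller than $((m+1)0)^\omega$ for every $i\ge0$. *)

(* Defs.v *)
From Stdlib Require Import Reals ZArith.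
Open Scope R_scope.

Definition Rfloor (x : R) : Z := (up x - 1)%Z.

Fixpoint renyi_rem (delta x : R) (k : nat) : R :=
  match k with
  | O => x
  | S k' => delta * renyi_rem delta x k' - IZR (Rfloor (delta * renyi_rem delta x k'))
  end.

(* Renyi digits: d_{k+1} = floor(delta r_k); renyi_digit delta x k = d_k for k >= 1
   (the value at k = 0 is irrelevant and set to 0). *)
Definition renyi_digit (delta x : R) (k : nat) : Z :=
  match k with
  | O => 0%Z
  | S k' => Rfloor (delta * renyi_rem delta x k')
  end.

Definition is_rational (x : R) : Prop :=
  exists (p : Z) (q : Z), q <> 0%Z /\ x = IZR p / IZR q.

(* Main.v *)
Require Import Defs.
From Stdlib Require Import Reals ZArith Lra Lia Psatz.
Open Scope R_scope.

Lemma Rfloor_spec x : IZR (Rfloor x) <= x < IZR (Rfloor x) + 1.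
Proof.
  unfold Rfloor. destruct (archimed x) as [H1 H2].
  rewrite minus_IZR. simpl. lra.
Qed.

Lemma rem_bounds delta x k : 0 <= x < 1 -> 0 <= renyi_rem delta x k < 1.
Proof.
  intros Hx. destruct k as [|k]; simpl; [lra|].
  pose proof (Rfloor_spec (delta * renyi_rem delta x k)). lra.
Qed.

Lemma bern d k : 1 < d -> 1 + INR k * (d - 1) <= d ^ k.
Proof.
  intros Hd. induction k as [|k IH]; [simpl; lra|].
  rewrite S_INR, <- tech_pow_Rmult.
  assert (0 <= INR k) by apply pos_INR.
  assert (1 <= d ^ k) by nra.
  assert (0 <= (d - 1) * (d ^ k - 1)) by (apply Rmult_le_pos; lra). nra.
Qed.

Lemma irrat (m : nat) (delta : R) :
  1 < delta -> delta ^ 2 - (INR m + 1) * delta - 1 = 0 ->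
  forall a b : Z, IZR a + IZR b * delta = 0 -> b = 0%Z.
Proof.
  intros Hd Hq.
  assert (Hinv : delta - (INR m + 1) = / delta).
  { apply (Rmult_eq_reg_l delta); [|lra]. rewrite Rinv_r by lra. nra. }
  assert (Hm0 : 0 <= INR m) by apply pos_INR.
  assert (key : forall N : nat, forall b a : Z, (0 < b)%Z -> (Z.to_nat b <= N)%nat ->
            delta * IZR b <> IZR a).
  { induction N as [|N IH]; intros b a Hb HN Heq; [lia|].
    set (b' := (a - (Z.of_nat m + 1) * b)%Z).
    assert (Hb' : IZR b' = IZR b * / delta).
    { unfold b'. rewrite minus_IZR, mult_IZR, plus_IZR, <- INR_IZR_INZ.
      rewrite <- Heq. rewrite <- Hinv. simpl. ring. }
    assert (Hbpos : 0 < IZR b) by (apply IZR_lt; lia).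
    assert (0 < / delta < 1).
    { split. apply Rinv_0_lt_compat; lra.
      rewrite <- Rinv_1. apply Rinv_lt_contravar; lra. }
    assert (0 < IZR b') by (rewrite Hb'; nra).
    assert (IZR b' < IZR b) by (rewrite Hb'; nra).
    apply lt_IZR in H0. apply lt_IZR in H1.
    apply (IH b' b); [lia|lia|].
    rewrite Hb'. field. lra. }
  intros a b Hab. destruct (Z.lt_trichotomy b 0) as [Hn|[Hz|Hp]]; auto.
  - exfalso. apply (key (Z.to_nat (- b)) (- b)%Z a); [lia|lia|].
    rewrite opp_IZR. lra.
  - exfalso. apply (key (Z.to_nat b) b (- a)%Z); [lia|lia|].
    rewrite opp_IZR. lra.
Qed.

Fixpoint ab (delta r : R) (m : nat) (p q : Z) (k : nat) : Z * Z :=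
  match k with
  | O => (p, 0%Z)
  | S k' => let (a, b) := ab delta r m p q k' in
            ((b - q * renyi_digit delta r (S k'))%Z, (a + (Z.of_nat m + 1) * b)%Z)
  end.

Fixpoint conj (delta r : R) (m : nat) (k : nat) : R :=
  match k with
  | O => r
  | S k' => (INR m + 1 - delta) * conj delta r m k' - IZR (renyi_digit delta r (S k'))
  end.

Theorem mainTheorem11 (m : nat) (delta r : R) (n : nat) :
  (1 <= m)%nat ->
  1 < delta ->
  delta ^ 2 - (INR m + 1) * delta - 1 = 0 ->
  0 < r < 1 ->
  is_rational r ->
  (1 <= n)%nat ->
  (forall k : nat, (1 <= k)%nat -> renyi_digit delta r (k + n) = renyi_digit delta r k) ->
  renyi_digit delta r n = 0%Z.
Proof.
  intros Hm Hd Hq Hr [p [q [Hq0 Hpq]]] Hn Hper.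
  assert (Hm0 : 0 <= INR m) by apply pos_INR.
  assert (Hinv : delta - (INR m + 1) = / delta).
  { apply (Rmult_eq_reg_l delta); [|lra]. rewrite Rinv_r by lra. nra. }
  assert (Hdlt : delta < INR m + 2).
  { assert (/ delta < 1). rewrite <- Rinv_1. apply Rinv_lt_contravar; lra. lra. }
  assert (Hdiff : forall k, renyi_rem delta r (k + n) - renyi_rem delta r k
                 = delta ^ k * (renyi_rem delta r n - r)).
  { induction k as [|k IH]; [simpl; ring|].
    pose proof (Hper (S k) ltac:(lia)) as HP. simpl in HP |- *.
    rewrite HP. rewrite Rmult_assoc, <- IH. ring. }
  assert (Hrn : renyi_rem delta r n = r).
  { destruct (Req_dec (renyi_rem delta r n - r) 0) as [E|E]; [lra|exfalso].
    assert (Ha : 0 < Rabs (renyi_rem delta r n - r)) by (apply Rabs_pos_lt; auto).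
    destruct (INR_archimed (Rabs (renyi_rem delta r n - r) * (delta - 1)) 1)
      as [k Hk]; [nra|].
    specialize (Hdiff k).
    pose proof (rem_bounds delta r (k + n) ltac:(lra)).
    pose proof (rem_bounds delta r k ltac:(lra)).
    assert (Habs : Rabs (delta ^ k * (renyi_rem delta r n - r)) < 1).
    { rewrite <- Hdiff. apply Rabs_def1; lra. }
    rewrite Rabs_mult, Rabs_pos_eq in Habs by (apply pow_le; lra).
    pose proof (bern delta k Hd). nra. }
  assert (Hdig : forall k, (0 <= renyi_digit delta r (S k) <= Z.of_nat m + 1)%Z).
  { intros k. simpl. pose proof (rem_bounds delta r k ltac:(lra)) as Hb.
    pose proof (Rfloor_spec (delta * renyi_rem delta r k)) as Hf.
    split.
    - assert (-1 < IZR (Rfloor (delta * renyi_rem delta r k))) by nra.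
      apply lt_IZR in H. lia.
    - assert (IZR (Rfloor (delta * renyi_rem delta r k)) < IZR (Z.of_nat m + 2)).
      { rewrite plus_IZR, <- INR_IZR_INZ. nra. }
      apply lt_IZR in H. lia. }
  assert (Hab : forall k, IZR q * renyi_rem delta r k
        = IZR (fst (ab delta r m p q k)) + IZR (snd (ab delta r m p q k)) * delta
        /\ IZR q * conj delta r m k
        = IZR (fst (ab delta r m p q k)) + IZR (snd (ab delta r m p q k)) * (INR m + 1 - delta)).
  { induction k as [|k [IH1 IH2]].
    - simpl. rewrite Hpq. split; field; apply not_0_IZR; auto.
    - simpl. destruct (ab delta r m p q k) as [a b]. simpl in *.
      rewrite !minus_IZR, !plus_IZR, !mult_IZR, plus_IZR, <- INR_IZR_INZ.
      split.
      + replace (IZR q * (delta * renyi_rem delta r k -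
                 IZR (Rfloor (delta * renyi_rem delta r k))))
          with (delta * (IZR q * renyi_rem delta r k) -
                IZR q * IZR (Rfloor (delta * renyi_rem delta r k))) by ring.
        rewrite IH1. match goal with |- ?L = ?R => assert (HH : L - R = IZR b * (delta * delta - (INR m + 1) * delta - 1)) by ring end; assert (Hq2 : delta * delta - (INR m + 1) * delta - 1 = 0) by (simpl in Hq; lra); rewrite Hq2 in HH; lra.
      + replace (IZR q * ((INR m + 1 - delta) * conj delta r m k -
                 IZR (Rfloor (delta * renyi_rem delta r k))))
          with ((INR m + 1 - delta) * (IZR q * conj delta r m k) -
                IZR q * IZR (Rfloor (delta * renyi_rem delta r k))) by ring.
        rewrite IH2. match goal with |- ?L = ?R => assert (HH : L - R = IZR b * (delta * delta - (INR m + 1) * delta - 1)) by ring end; assert (Hq2 : delta * delta - (INR m + 1) * delta - 1 = 0) by (simpl in Hq; lra); rewrite Hq2 in HH; lra. }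
  assert (Hcn : conj delta r m n = r).
  { destruct (Hab n) as [H1 H2].
    destruct (ab delta r m p q n) as [a b]. simpl in *.
    assert (Hqr : IZR q * r = IZR p) by (rewrite Hpq; field; apply not_0_IZR; auto).
    rewrite Hrn, Hqr in H1.
    assert (b = 0%Z) by (apply (irrat m delta Hd Hq (a - p) b); rewrite minus_IZR; lra).
    subst b. simpl in *.
    apply (Rmult_eq_reg_l (IZR q)); [|apply not_0_IZR; auto]. lra. }
  assert (Hcb : forall k, - delta <= conj delta r m k <= 1).
  { induction k as [|k IH]; simpl; [lra|].
    pose proof (Hdig k) as [H0 H1]. simpl in H0, H1.
    apply IZR_le in H0. apply IZR_le in H1.
    rewrite plus_IZR, <- INR_IZR_INZ in H1.
    assert (HD : INR m + 1 - delta = - / delta) by lra.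
    rewrite HD.
    assert (0 < / delta) by (apply Rinv_0_lt_compat; lra).
    assert (/ delta * delta = 1) by (field; lra).
    split; nra. }
  destruct n as [|n']; [lia|].
  pose proof (Hdig n') as [H0 H1].
  destruct (Z.eq_dec (renyi_digit delta r (S n')) 0) as [E|E]; auto.
  exfalso.
  assert (Hge : (1 <= renyi_digit delta r (S n'))%Z) by lia.
  apply IZR_le in Hge.
  cbn [conj] in Hcn. pose proof (Hcb n').
  assert (HD : INR m + 1 - delta = - / delta) by lra.
  rewrite HD in Hcn.
  assert (0 < / delta) by (apply Rinv_0_lt_compat; lra).
  assert (/ delta * delta = 1) by (field; lra).
  assert (0 <= / delta * (conj delta r m n' + delta)) by (apply Rmult_le_pos; lra).
  nra.
Qed.
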